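(* Fix $p\in(1/2,1]$, $C\in\mathbb{R}$, $t>0$, and write $N(t)=\lfloor (p-q)(t-Ct^{1/2})\rfloor$. Consider three ASEPs coupled by the basic coupling: $x$ started from $x_n(0)=-n-N(t)$ ($n\ge1$), $x_n(0)=-n$ ($-N(t)\le n\le0$); $x^A$ started from $x^A_n(0)=-n-N(t)$ ($n\ge1$); $x^B$ started from $x^B_n(0)=-n$ ($n\ge -N(t)$). Let $y_n(s)=\min\{x^A_n(s),x^B_n(s)\}$. Then for all $n\ge1$ and $s\ge0$: in TASEP ($p=1$), $y_n(s)=x_n(s)$; in ASEP (any $p\in(1/2,1]$), $y_n(s)\ge x_n(s)$.
   Context: ASEP on $\mathbb{Z}$ with parameter $p\in(1/2,1]$, $q=1-p$; TASEP is $p=1$. Particles carry integer labels, $x_n(s)$ being the position at time $s$ of the particle labeled $n$, with $x_{n+1}(s)<x_n(s)$. Basic coupling: all processes are constructed from one common family of independent Poisson processes $(P^{i,i+1})_{i\in\mathbb{Z}}$ of rate $p$ and $(P^{i,i-1})_{i\in\mathbb{Z}}$ of rate $q$; whenever $P^{i,i\pm1}$ jumps, in each process a particle at $i$ moves to $i\pm1$ if that site is empty. *)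

(* Defs.v *)
From Stdlib Require Export Reals ZArith List.
Open Scope R_scope.

(* Floor of a real number: up r is the unique integer z with r < z <= r+1. *)
Definition Zfloor (r : R) : Z := (up r - 1)%Z.

(* A realization of the family of Poisson processes of the basic coupling:
   [P i j tau] means that the clock P^{i,j} rings at time tau. *)
Definition clocks := Z -> Z -> R -> Prop.

(* Pathwise properties of the Poisson clocks which hold almost surely
   (for any rates): positive ring times, only nearest-neighbour clocks,
   finitely many rings of each clock in bounded time, no two clocks ring
   simultaneously, and for every horizon T there are silent bonds
   (no ring in (0,T] in either direction) arbitrarily far to the left and
   to the right (Harris' construction condition). *)
Definition silent_bond (P : clocks) (i : Z) (T : R) : Prop :=
  forall tau, 0 < tau <= T -> ~ P i (i + 1)%Z tau /\ ~ P (i + 1)%Z i tau.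

Definition good_clocks (P : clocks) : Prop :=
  (forall i j tau, P i j tau -> 0 < tau) /\
  (forall i j tau, P i j tau -> j = (i + 1)%Z \/ j = (i - 1)%Z) /\
  (forall i j T, exists l : list R, forall tau, P i j tau -> tau <= T -> In tau l) /\
  (forall i j i' j' tau, P i j tau -> P i' j' tau -> i = i' /\ j = j') /\
  (forall T m, exists i, (i < m)%Z /\ silent_bond P i T) /\
  (forall T m, exists i, (m < i)%Z /\ silent_bond P i T).

(* [x n s] is the position at time s of the particle with label n; the labels
   are the integers n >= n0 (x_{n+1} < x_n, so label n-1 is the right neighbour
   of n and label n+1 its left neighbour).  [asep_path P n0 x0 x] says that x is
   the ASEP driven by the clocks P (basic coupling) started from x0: at a ring
   of P^{i,i+/-1} at time s, a particle at i (just before s) jumps to i+/-1 if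
   that site is empty (just before s); trajectories are right-continuous with
   left limits and change only according to this rule. *)
Definition asep_path (P : clocks) (n0 : Z) (x0 : Z -> Z) (x : Z -> R -> Z) : Prop :=
  (forall n, (n0 <= n)%Z -> x n 0 = x0 n) /\
  (forall n s, (n0 <= n)%Z -> 0 <= s -> (x (n + 1)%Z s < x n s)%Z) /\
  (forall n s, (n0 <= n)%Z -> 0 <= s ->
     exists eps, 0 < eps /\ forall u, s <= u < s + eps -> x n u = x n s) /\
  (forall n s, (n0 <= n)%Z -> 0 < s ->
     exists eps (a b c : Z), 0 < eps <= s /\
       (forall u, s - eps < u < s ->
          x n u = a /\ x (n + 1)%Z u = c /\ ((n0 <= n - 1)%Z -> x (n - 1)%Z u = b)) /\
       let right_ok := P a (a + 1)%Z s /\ ~ ((n0 <= n - 1)%Z /\ b = (a + 1)%Z) in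
       let left_ok := P a (a - 1)%Z s /\ c <> (a - 1)%Z in
       (right_ok /\ x n s = (a + 1)%Z) \/
       (left_ok /\ x n s = (a - 1)%Z) \/
       (~ right_ok /\ ~ left_ok /\ x n s = a)).

(* Main.v *)
Require Import Defs.
From Stdlib Require Import Reals ZArith List Lia Lra Classical.
Open Scope R_scope.

Lemma real_ind (Q : R -> Prop) (T : R) :
  0 <= T -> Q 0 ->
  (forall u, 0 <= u < T -> Q u -> exists eps, 0 < eps /\ forall v, u <= v < u + eps -> Q v) ->
  (forall u, 0 < u <= T -> (forall v, 0 <= v < u -> Q v) -> Q u) ->
  forall u, 0 <= u <= T -> Q u.
Proof.
  intros HT H0 Hr Hl.
  set (E := fun v => 0 <= v <= T /\ forall w, 0 <= w <= v -> Q w).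
  assert (Hb : bound E) by (exists T; intros v [Hv _]; lra).
  assert (He : exists v, E v).
  { exists 0; split; [lra|]. intros w Hw. replace w with 0 by lra. exact H0. }
  destruct (completeness E Hb He) as [S [HS1 HS2]].
  assert (S0 : 0 <= S) by (apply HS1; split; [lra|]; intros w Hw; replace w with 0 by lra; exact H0).
  assert (ST : S <= T) by (apply HS2; intros v [Hv _]; lra).
  assert (Hlt : forall w, 0 <= w < S -> Q w).
  { intros w Hw. destruct (classic (exists v, E v /\ w <= v)) as [[v [[Hv1 Hv2] Hwv]]|Hn].
    - apply Hv2; lra.
    - assert (S <= w); [|lra]. apply HS2. intros v Ev.
      destruct (Rle_dec v w) as [?|Hvw]; [lra|]. exfalso; apply Hn; exists v; split; [exact Ev|lra]. }
  assert (HSQ : forall w, 0 <= w <= S -> Q w).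
  { intros w Hw. destruct (Req_dec w S) as [->|Hne]; [|apply Hlt; lra].
    destruct (Rle_lt_or_eq_dec 0 S S0) as [HS0| <-]; [|exact H0]. apply Hl; [lra|]. exact Hlt. }
  assert (S = T).
  { destruct (Rle_lt_or_eq_dec S T ST) as [Hne|?]; [exfalso|assumption].
    destruct (Hr S (conj S0 Hne) (HSQ S (conj S0 (Rle_refl S)))) as [eps [Heps Hv]].
    set (v := Rmin (S + eps/2) T).
    assert (Ev : E v).
    { split. unfold v; unfold Rmin; destruct (Rle_dec _ _); lra.
      intros w Hw. destruct (Rle_dec w S). apply HSQ; lra.
      apply Hv. split; [lra|]. unfold v, Rmin in Hw; destruct (Rle_dec _ _); lra. }
    specialize (HS1 v Ev). unfold v, Rmin in HS1; destruct (Rle_dec _ _); lra. }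
  subst S. intros u Hu. apply HSQ; lra.
Qed.

Lemma fin_eps (F : Z -> R -> Prop) (lo : Z) (k : nat) :
  (forall m e e', 0 < e' <= e -> F m e -> F m e') ->
  (forall m, (lo <= m < lo + Z.of_nat k)%Z -> exists e, 0 < e /\ F m e) ->
  exists e, 0 < e /\ forall m, (lo <= m < lo + Z.of_nat k)%Z -> F m e.
Proof.
  intros Hmono. induction k as [|k IH]; intros H.
  - exists 1; split; [lra|]. intros m Hm; lia.
  - destruct IH as [e1 [He1 H1]].
    { intros m Hm; apply H; lia. }
    destruct (H (lo + Z.of_nat k)%Z ltac:(lia)) as [e2 [He2 H2]].
    exists (Rmin e1 e2). split. apply Rmin_pos; lra.
    intros m Hm. destruct (Z.eq_dec m (lo + Z.of_nat k)) as [->|Hne].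
    + apply Hmono with e2; [split; [apply Rmin_pos; lra|apply Rmin_r]|exact H2].
    + apply Hmono with e1; [split; [apply Rmin_pos; lra|apply Rmin_l]|apply H1; lia].
Qed.

Lemma clk_rl P a a' u : good_clocks P -> P a (a + 1)%Z u -> P a' (a' - 1)%Z u -> False.
Proof. intros [_ [_ [_ [H _]]]] H1 H2. destruct (H _ _ _ _ _ H1 H2). lia. Qed.

Lemma silent_r P i T a u : silent_bond P i T -> 0 < u <= T -> P a (a + 1)%Z u -> a <> i.
Proof. intros H Hu Hp ->. exact (proj1 (H u Hu) Hp). Qed.

Lemma silent_l P i T a u : silent_bond P i T -> 0 < u <= T -> P a (a - 1)%Z u -> a <> (i + 1)%Z.
Proof. intros H Hu Hp ->. replace (i + 1 - 1)%Z with i in Hp by ring. exact (proj2 (H u Hu) Hp). Qed.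

Lemma gen_step P n0 x0 x m u : asep_path P n0 x0 x -> (n0 <= m)%Z -> 0 < u ->
  exists eps, 0 < eps <= u /\ forall v, u - eps < v < u ->
   (x m u = (x m v + 1)%Z /\ P (x m v) (x m v + 1)%Z u /\ ~ ((n0 <= m - 1)%Z /\ x (m - 1)%Z v = (x m v + 1)%Z)) \/
   (x m u = (x m v - 1)%Z /\ P (x m v) (x m v - 1)%Z u /\ x (m + 1)%Z v <> (x m v - 1)%Z) \/
   (x m u = x m v /\ ~ (P (x m v) (x m v + 1)%Z u /\ ~ ((n0 <= m - 1)%Z /\ x (m - 1)%Z v = (x m v + 1)%Z))
      /\ ~ (P (x m v) (x m v - 1)%Z u /\ x (m + 1)%Z v <> (x m v - 1)%Z)).
Proof.
  intros [_ [_ [_ H4]]] Hm Hu.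
  destruct (H4 m u Hm Hu) as [eps [a [b [c [[He1 He2] [Hv Hr]]]]]].
  exists eps; split; [lra|]. intros v Hvv. destruct (Hv v Hvv) as [Ha [Hc Hb]].
  rewrite Ha, Hc. cbv zeta in Hr.
  assert (Hiff : ((n0 <= m - 1)%Z /\ b = (a + 1)%Z) <-> ((n0 <= m - 1)%Z /\ x (m - 1)%Z v = (a + 1)%Z)).
  { split; intros [H1 H2]; split; auto; rewrite (Hb H1) in *; auto. }
  destruct Hr as [[[H1 H2] H3]|[[[H1 H2] H3]|[H1 [H2 H3]]]].
  - left. repeat split; auto. rewrite <- Hiff; auto.
  - right; left. auto.
  - right; right. repeat split; auto. rewrite <- Hiff; auto.
Qed.

Lemma right_const P n0 x0 x m u : asep_path P n0 x0 x -> (n0 <= m)%Z -> 0 <= u ->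
  exists eps, 0 < eps /\ forall v, u <= v < u + eps -> x m v = x m u.
Proof. intros [_ [_ [H3 _]]] Hm Hu. exact (H3 m u Hm Hu). Qed.

Lemma no_cross P n0 x0 x T i m : good_clocks P -> asep_path P n0 x0 x -> silent_bond P i T ->
  0 <= T -> (n0 <= m)%Z -> forall u, 0 <= u <= T -> ((i < x m u)%Z <-> (i < x m 0%R)%Z).
Proof.
  intros G Hx Hs HT Hm. apply real_ind; [exact HT|tauto| |].
  - intros u Hu Q. destruct (right_const P n0 x0 x m u Hx Hm ltac:(lra)) as [eps [He Hv]].
    exists eps; split; auto. intros v Hv'. rewrite Hv; auto.
  - intros u Hu Q. destruct (gen_step P n0 x0 x m u Hx Hm ltac:(lra)) as [eps [He Hv]].
    specialize (Hv (u - eps/2) ltac:(lra)). specialize (Q (u - eps/2) ltac:(lra)).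
    set (a := x m (u - eps/2)) in *.
    destruct Hv as [[H1 [H2 _]]|[[H1 [H2 _]]|[H1 _]]]; rewrite H1.
    + pose proof (silent_r _ _ _ _ _ Hs Hu H2). lia.
    + pose proof (silent_l _ _ _ _ _ Hs Hu H2). lia.
    + exact Q.
Qed.

Lemma pre_inv P n0 x0 x T Lb Rb m u : good_clocks P -> asep_path P n0 x0 x ->
  silent_bond P Lb T -> silent_bond P Rb T -> 0 <= T -> (n0 <= m)%Z -> 0 <= u <= T ->
  ((Lb < x m u <= Rb)%Z <-> (Lb < x m 0%R <= Rb)%Z).
Proof.
  intros G Hx HL HR HT Hm Hu.
  pose proof (no_cross P n0 x0 x T Lb m G Hx HL HT Hm u Hu).
  pose proof (no_cross P n0 x0 x T Rb m G Hx HR HT Hm u Hu). lia.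
Qed.

Lemma ordv P n0 x0 x m v : asep_path P n0 x0 x -> (n0 <= m)%Z -> 0 <= v -> (x (m + 1)%Z v < x m v)%Z.
Proof. intros [_ [H _]] Hm Hv. exact (H m v Hm Hv). Qed.

Lemma compare P n0 x0 x n0' x0' x' T Lb Rb K :
 good_clocks P -> asep_path P n0 x0 x -> asep_path P n0' x0' x' -> (n0 <= n0')%Z -> 0 <= T ->
 silent_bond P Lb T -> silent_bond P Rb T ->
 (forall m, (n0' <= m)%Z -> (x m 0%R <= x' m 0%R)%Z) ->
 (forall m, (n0' <= m)%Z -> ((Lb < x m 0%R <= Rb) \/ (Lb < x' m 0%R <= Rb))%Z -> (m <= K)%Z) ->
 forall u, 0 <= u <= T -> forall m, (n0' <= m)%Z ->
   ((Lb < x m u <= Rb) \/ (Lb < x' m u <= Rb))%Z -> (x m u <= x' m u)%Z.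
Proof.
  intros G Hx Hx' Hn HT HL HR H0 HK.
  assert (Hinv : forall m u, (n0' <= m)%Z -> 0 <= u <= T ->
     (((Lb < x m u <= Rb) \/ (Lb < x' m u <= Rb))%Z <-> ((Lb < x m 0%R <= Rb) \/ (Lb < x' m 0%R <= Rb))%Z)).
  { intros m u Hm Hu.
    pose proof (pre_inv P n0 x0 x T Lb Rb m u G Hx HL HR HT ltac:(lia) Hu).
    pose proof (pre_inv P n0' x0' x' T Lb Rb m u G Hx' HL HR HT ltac:(lia) Hu). tauto. }
  assert (Hmain : forall u, 0 <= u <= T -> forall m, (n0' <= m <= K)%Z ->
   ((Lb < x m u <= Rb) \/ (Lb < x' m u <= Rb))%Z -> (x m u <= x' m u)%Z).
  { apply (real_ind (fun u => forall m, (n0' <= m <= K)%Z ->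
   ((Lb < x m u <= Rb) \/ (Lb < x' m u <= Rb))%Z -> (x m u <= x' m u)%Z)); [exact HT| | |].
    - intros m Hm _. apply H0; lia.
    - intros u Hu Q.
      destruct (fin_eps (fun m e => forall v, u <= v < u + e -> x m v = x m u /\ x' m v = x' m u)
                 n0' (Z.to_nat (K - n0' + 1))) as [e [He Hf]].
      + intros m e e' He' Hf v Hv. apply Hf. lra.
      + intros m Hm.
        destruct (right_const P n0 x0 x m u Hx ltac:(lia) ltac:(lra)) as [e1 [He1 H1]].
        destruct (right_const P n0' x0' x' m u Hx' ltac:(lia) ltac:(lra)) as [e2 [He2 H2]].
        exists (Rmin e1 e2); split; [apply Rmin_pos; lra|].
        intros v Hv. pose proof (Rmin_l e1 e2). pose proof (Rmin_r e1 e2).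
        split; [apply H1|apply H2]; lra.
      + exists e; split; [exact He|]. intros v Hv m Hm.
        destruct (Hf m ltac:(lia) v Hv) as [E1 E2]. rewrite E1, E2. apply Q; lia.
    - intros u Hu Q m Hm Hpre.
      destruct (gen_step P n0 x0 x m u Hx ltac:(lia) ltac:(lra)) as [e1 [He1 H1]].
      destruct (gen_step P n0' x0' x' m u Hx' ltac:(lia) ltac:(lra)) as [e2 [He2 H2]].
      set (v := u - Rmin e1 e2 / 2).
      assert (Hv1 : u - e1 < v < u) by (pose proof (Rmin_l e1 e2); pose proof (Rmin_pos e1 e2); unfold v; lra).
      assert (Hv2 : u - e2 < v < u) by (pose proof (Rmin_r e1 e2); pose proof (Rmin_pos e1 e2); unfold v; lra).
      assert (Hv : 0 <= v <= T) by lra.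
      specialize (H1 v Hv1). specialize (H2 v Hv2).
      assert (Qm : (x m v <= x' m v)%Z).
      { apply Q; [lra|lia|]. apply (proj2 (Hinv m v ltac:(lia) Hv)). apply (proj1 (Hinv m u ltac:(lia) ltac:(lra))). exact Hpre. }
      assert (Qm1 : (n0' <= m - 1)%Z -> (Lb < x' (m - 1)%Z v <= Rb)%Z -> (x (m - 1)%Z v <= x' (m - 1)%Z v)%Z).
      { intros. apply Q; [lra|lia|tauto]. }
      assert (Qp1 : (Lb < x (m + 1)%Z v <= Rb)%Z -> (x (m + 1)%Z v <= x' (m + 1)%Z v)%Z).
      { intros. apply Q; [lra| |tauto]. split; [lia|]. apply HK; [lia|].
        apply (proj1 (Hinv (m+1)%Z v ltac:(lia) Hv)). tauto. }
      pose proof (ordv P n0 x0 x m v Hx ltac:(lia) ltac:(lra)) as O1.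
      pose proof (ordv P n0' x0' x' m v Hx' ltac:(lia) ltac:(lra)) as O2.
      assert (O3 : (n0 <= m - 1)%Z -> (x m v < x (m - 1)%Z v)%Z).
      { intros Hq. pose proof (ordv P n0 x0 x (m - 1)%Z v Hx ltac:(lia) ltac:(lra)) as Hq'.
        replace (m - 1 + 1)%Z with m in Hq' by ring. exact Hq'. }
      assert (Hpv : ((Lb < x m v <= Rb) \/ (Lb < x' m v <= Rb))%Z).
      { apply (proj2 (Hinv m v ltac:(lia) Hv)). apply (proj1 (Hinv m u ltac:(lia) ltac:(lra))). exact Hpre. }
      clear Q Hinv H0 HK.
      set (a := x m v) in *. set (a' := x' m v) in *.
      assert (S1 : forall z, P z (z + 1)%Z u -> z <> Rb /\ z <> Lb).
      { intros z Hz. split; [exact (silent_r P Rb T z u HR Hu Hz)|exact (silent_r P Lb T z u HL Hu Hz)]. }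
      assert (S2 : forall z, P z (z - 1)%Z u -> z <> (Lb + 1)%Z).
      { intros z Hz. exact (silent_l P Lb T z u HL Hu Hz). }
      destruct H1 as [[E1 [C1 N1]]|[[E1 [C1 N1]]|[E1 [N1 N1']]]];
      destruct H2 as [[E2 [C2 N2]]|[[E2 [C2 N2]]|[E2 [N2 N2']]]];
      rewrite E1, E2;
      try (exfalso; eapply clk_rl; [exact G|eassumption|eassumption]);
      try lia.
      + destruct (Z.eq_dec a a') as [Ea|Ea]; [|lia].
        rewrite <- Ea in N2.
        assert (Hb : (n0' <= m - 1)%Z /\ x' (m - 1)%Z v = (a + 1)%Z)
          by (apply NNPP; intro Hc; apply N2; split; assumption).
        destruct (S1 a C1). destruct Hb as [Hb1 Hb2].
        pose proof (Qm1 Hb1 ltac:(lia)). pose proof (O3 ltac:(lia)). lia.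
      + destruct (Z.eq_dec a a') as [Ea|Ea]; [|lia].
        rewrite <- Ea in C2, N2.
        assert (Hc : x (m + 1)%Z v = (a - 1)%Z)
          by (apply NNPP; intro Hc; apply N1'; split; assumption).
        pose proof (S2 a C2).
        pose proof (Qp1 ltac:(lia)). lia. }
  intros u Hu m Hm Hp. apply Hmain; auto. split; [exact Hm|]. apply HK; auto.
  apply (proj1 (Hinv m u Hm Hu)). exact Hp.
Qed.

Definition noleft (P : clocks) := forall i tau, ~ P i (i - 1)%Z tau.

Lemma tstep P nz z0 z m u : noleft P -> asep_path P nz z0 z -> 0 < u ->
  exists eps, 0 < eps <= u /\ forall v, u - eps < v < u -> (nz <= m)%Z ->
   (z m u = (z m v + 1)%Z /\ P (z m v) (z m v + 1)%Z u /\ ~ ((nz <= m - 1)%Z /\ z (m - 1)%Z v = (z m v + 1)%Z)) \/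
   (z m u = z m v /\ ~ (P (z m v) (z m v + 1)%Z u /\ ~ ((nz <= m - 1)%Z /\ z (m - 1)%Z v = (z m v + 1)%Z))).
Proof.
  intros NL Hz Hu. destruct (Z_le_dec nz m) as [Hm|Hm].
  - destruct (gen_step P nz z0 z m u Hz Hm Hu) as [eps [He H]].
    exists eps; split; auto. intros v Hv _. destruct (H v Hv) as [H1|[[_ [H2 _]]|[H1 [H2 _]]]].
    + left; exact H1.
    + exfalso; exact (NL _ _ H2).
    + right; auto.
  - exists u; split; [lra|]. intros; lia.
Qed.

Lemma comp_arith (P : clocks) nz (z : Z -> R -> Z) m u v a :
  (z m u = (z m v + 1)%Z /\ P (z m v) (z m v + 1)%Z u /\ ~ ((nz <= m - 1)%Z /\ z (m - 1)%Z v = (z m v + 1)%Z)) \/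
   (z m u = z m v /\ ~ (P (z m v) (z m v + 1)%Z u /\ ~ ((nz <= m - 1)%Z /\ z (m - 1)%Z v = (z m v + 1)%Z))) ->
  (z m u = (z m v + 1)%Z /\ (z m v = a -> P a (a + 1)%Z u) /\ ~ ((nz <= m - 1)%Z /\ z (m - 1)%Z v = (z m v + 1)%Z)) \/
  (z m u = z m v /\ (z m v = a -> P a (a + 1)%Z u -> ((nz <= m - 1)%Z /\ z (m - 1)%Z v = (z m v + 1)%Z))).
Proof.
  intros [[H1 [H2 H3]]|[H1 H2]].
  - left; repeat split; auto. intros <-; exact H2.
  - right; split; auto. intros <- Hp. apply NNPP; intro Hc; apply H2; split; auto.
Qed.

Lemma comp_true (P : clocks) nz (z : Z -> R -> Z) m u v a :
  P a (a + 1)%Z u ->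
  (z m u = (z m v + 1)%Z /\ P (z m v) (z m v + 1)%Z u /\ ~ ((nz <= m - 1)%Z /\ z (m - 1)%Z v = (z m v + 1)%Z)) \/
   (z m u = z m v /\ ~ (P (z m v) (z m v + 1)%Z u /\ ~ ((nz <= m - 1)%Z /\ z (m - 1)%Z v = (z m v + 1)%Z))) ->
  (z m u = (z m v + 1)%Z /\ ~ ((nz <= m - 1)%Z /\ z (m - 1)%Z v = (z m v + 1)%Z)) \/
  (z m u = z m v /\ (z m v = a -> ((nz <= m - 1)%Z /\ z (m - 1)%Z v = (z m v + 1)%Z))).
Proof.
  intros Hp [[H1 [H2 H3]]|[H1 H2]].
  - left; auto.
  - right; split; auto. intros <-. apply NNPP; intro Hc; apply H2; split; auto.
Qed.

Lemma comp_false (P : clocks) nz (z : Z -> R -> Z) m u v a :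
  ~ P a (a + 1)%Z u ->
  (z m u = (z m v + 1)%Z /\ P (z m v) (z m v + 1)%Z u /\ ~ ((nz <= m - 1)%Z /\ z (m - 1)%Z v = (z m v + 1)%Z)) \/
   (z m u = z m v /\ ~ (P (z m v) (z m v + 1)%Z u /\ ~ ((nz <= m - 1)%Z /\ z (m - 1)%Z v = (z m v + 1)%Z))) ->
  (z m u = (z m v + 1)%Z /\ z m v <> a) \/ z m u = z m v.
Proof.
  intros Hp [[H1 [H2 H3]]|[H1 H2]].
  - left; split; auto. intros <-; contradiction.
  - right; auto.
Qed.

Definition ymin (xA xB : Z -> R -> Z) (nA m : Z) (u : R) : Z :=
  if (nA <=? m)%Z then Z.min (xA m u) (xB m u) else xB m u.

Lemma tasep_min P n0 x0 x nA xA0 xA xB0 xB T Lb Rb K :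
 good_clocks P -> noleft P -> asep_path P n0 x0 x -> asep_path P nA xA0 xA -> asep_path P n0 xB0 xB ->
 (n0 <= nA)%Z -> 0 <= T -> silent_bond P Lb T -> silent_bond P Rb T ->
 (forall m, (n0 <= m)%Z -> (ymin xA xB nA m 0%R <= x m 0%R)%Z) ->
 (forall m, (n0 <= m)%Z -> (Lb < x m 0%R <= Rb)%Z -> (m <= K)%Z) ->
 forall u, 0 <= u <= T -> forall m, (n0 <= m)%Z -> (Lb < x m u <= Rb)%Z -> (ymin xA xB nA m u <= x m u)%Z.
Proof.
  intros G NL Hx HxA HxB Hn HT HL HR H0 HK.
  assert (Hmain : forall u, 0 <= u <= T -> forall m, (n0 <= m <= K)%Z ->
     (Lb < x m u <= Rb)%Z -> (ymin xA xB nA m u <= x m u)%Z).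
  { apply (real_ind (fun u => forall m, (n0 <= m <= K)%Z ->
     (Lb < x m u <= Rb)%Z -> (ymin xA xB nA m u <= x m u)%Z)); [exact HT| | |].
    - intros m Hm _. apply H0; lia.
    - intros u Hu Q.
      destruct (fin_eps (fun m e => forall v, u <= v < u + e -> x m v = x m u /\ ((nA <= m)%Z -> xA m v = xA m u) /\ xB m v = xB m u)
                 n0 (Z.to_nat (K - n0 + 1))) as [e [He Hf]].
      + intros m e e' He' Hf v Hv. apply Hf. lra.
      + intros m Hm.
        destruct (right_const P n0 x0 x m u Hx ltac:(lia) ltac:(lra)) as [e1 [He1 H1]].
        destruct (right_const P n0 xB0 xB m u HxB ltac:(lia) ltac:(lra)) as [e2 [He2 H2]].
        destruct (Z_le_dec nA m) as [HmA|HmA].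
        * destruct (right_const P nA xA0 xA m u HxA HmA ltac:(lra)) as [e3 [He3 H3]].
          exists (Rmin e1 (Rmin e2 e3)); split; [apply Rmin_pos; [lra|apply Rmin_pos; lra]|].
          intros v Hv. pose proof (Rmin_l e1 (Rmin e2 e3)). pose proof (Rmin_r e1 (Rmin e2 e3)).
          pose proof (Rmin_l e2 e3). pose proof (Rmin_r e2 e3).
          split; [apply H1|split; [intros; apply H3|apply H2]]; lra.
        * exists (Rmin e1 e2); split; [apply Rmin_pos; lra|].
          intros v Hv. pose proof (Rmin_l e1 e2). pose proof (Rmin_r e1 e2).
          split; [apply H1|split; [intros; lia|apply H2]]; lra.
      + exists e; split; [exact He|]. intros v Hv m Hm.
        destruct (Hf m ltac:(lia) v Hv) as [E1 [E2 E3]]. unfold ymin. rewrite E1, E3.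
        intros Hp. pose proof (Q m Hm ltac:(lia)) as Qm. unfold ymin in Qm.
        destruct (Z.leb_spec nA m) as [HA|HA]; [rewrite (E2 HA)|]; exact Qm.
    - intros u Hu Q m Hm Hpre.
      destruct (tstep P n0 x0 x m u NL Hx ltac:(lra)) as [e1 [He1 H1]].
      destruct (tstep P n0 xB0 xB m u NL HxB ltac:(lra)) as [e2 [He2 H2]].
      destruct (tstep P nA xA0 xA m u NL HxA ltac:(lra)) as [e3 [He3 H3]].
      set (e := Rmin e1 (Rmin e2 e3)).
      assert (Hepos : 0 < e) by (apply Rmin_pos; [lra|apply Rmin_pos; lra]).
      assert (e <= e1 /\ e <= e2 /\ e <= e3).
      { unfold e. pose proof (Rmin_l e1 (Rmin e2 e3)). pose proof (Rmin_r e1 (Rmin e2 e3)).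
        pose proof (Rmin_l e2 e3). pose proof (Rmin_r e2 e3). lra. }
      set (v := u - e / 2).
      assert (Hv : 0 <= v <= T) by (unfold v; lra).
      specialize (H1 v ltac:(unfold v; lra) ltac:(lia)).
      specialize (H2 v ltac:(unfold v; lra) ltac:(lia)).
      specialize (H3 v ltac:(unfold v; lra)).
      assert (Hpv : (Lb < x m v <= Rb)%Z).
      { pose proof (pre_inv P n0 x0 x T Lb Rb m v G Hx HL HR HT ltac:(lia) Hv).
        pose proof (pre_inv P n0 x0 x T Lb Rb m u G Hx HL HR HT ltac:(lia) ltac:(lra)). tauto. }
      pose proof (Q v ltac:(unfold v; lra) m ltac:(lia) Hpv) as Qm.
      assert (Qm1 : (n0 <= m - 1)%Z -> (Lb < x (m - 1)%Z v <= Rb)%Z -> (ymin xA xB nA (m - 1)%Z v <= x (m - 1)%Z v)%Z).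
      { intros. apply Q; [unfold v; lra|lia|tauto]. }
      assert (OA : (nA <= m - 1)%Z -> (xA m v < xA (m - 1)%Z v)%Z).
      { intros Hq. pose proof (ordv P nA xA0 xA (m - 1)%Z v HxA ltac:(lia) ltac:(lra)) as Hq'.
        replace (m - 1 + 1)%Z with m in Hq' by ring. exact Hq'. }
      assert (OB : (n0 <= m - 1)%Z -> (xB m v < xB (m - 1)%Z v)%Z).
      { intros Hq. pose proof (ordv P n0 xB0 xB (m - 1)%Z v HxB ltac:(lia) ltac:(lra)) as Hq'.
        replace (m - 1 + 1)%Z with m in Hq' by ring. exact Hq'. }
      set (a := x m v) in *.
      assert (SR : P a (a + 1)%Z u -> a <> Rb) by (intro Hz; exact (silent_r P Rb T a u HR Hu Hz)).
      unfold ymin in *.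
      destruct (classic (P a (a + 1)%Z u)) as [Pa|Pa].
      + pose proof (SR Pa) as SR'. clear SR.
        apply (comp_true P n0 x m u v a Pa) in H1.
        apply (comp_true P n0 xB m u v a Pa) in H2.
        assert (H3' : (nA <= m)%Z -> _) by (intro Hq; exact (comp_true P nA xA m u v a Pa (H3 Hq))).
        clear H3. assert (Ha : a = x m v) by reflexivity. clearbody a.
        destruct (Z.leb_spec nA m); destruct (Z.leb_spec nA (m - 1)); lia.
      + clear SR.
        apply (comp_false P n0 x m u v a Pa) in H1.
        apply (comp_false P n0 xB m u v a Pa) in H2.
        assert (H3' : (nA <= m)%Z -> _) by (intro Hq; exact (comp_false P nA xA m u v a Pa (H3 Hq))).
        clear H3. assert (Ha : a = x m v) by reflexivity. clearbody a.
        destruct (Z.leb_spec nA m); destruct (Z.leb_spec nA (m - 1)); lia. }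

  intros u Hu m Hm Hp. apply Hmain; auto. split; [exact Hm|]. apply HK; auto.
  pose proof (pre_inv P n0 x0 x T Lb Rb m u G Hx HL HR HT Hm Hu). tauto.
Qed.

Theorem proposition2 (p C t : R) (P : clocks) (x xA xB : Z -> R -> Z) :
  1 / 2 < p <= 1 -> 0 < t ->
  let q := 1 - p in
  let Nt := Zfloor ((p - q) * (t - C * sqrt t)) in
  (0 <= Nt)%Z ->
  good_clocks P ->
  (* rate q = 0 in TASEP: the left clocks never ring *)
  (p = 1 -> forall i tau, ~ P i (i - 1)%Z tau) ->
  asep_path P (- Nt)%Z (fun n => if (1 <=? n)%Z then (- n - Nt)%Z else (- n)%Z) x ->
  asep_path P 1%Z (fun n => (- n - Nt)%Z) xA ->
  asep_path P (- Nt)%Z (fun n => (- n)%Z) xB ->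
  forall (n : Z) (s : R), (1 <= n)%Z -> 0 <= s ->
    (p = 1 -> Z.min (xA n s) (xB n s) = x n s) /\
    (x n s <= Z.min (xA n s) (xB n s))%Z.
Proof.
  intros Hp Ht q Nt HN G Hleft Hx HxA HxB n s Hn Hs.
  clearbody Nt.
  pose proof G as G'. destruct G' as [_ [_ [_ [_ [GL GR]]]]].
  destruct (GL s (x n 0%R)) as [Lb [HLb HL]].
  destruct (GR s (x n 0%R - 1)%Z) as [Rb [HRb HR]].
  assert (X0 : forall m, (- Nt <= m)%Z -> x m 0%R = (if (1 <=? m)%Z then (- m - Nt)%Z else (- m)%Z))
    by (intros m Hm; exact (proj1 Hx m Hm)).
  assert (XA0 : forall m, (1 <= m)%Z -> xA m 0%R = (- m - Nt)%Z) by (intros m Hm; exact (proj1 HxA m Hm)).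
  assert (XB0 : forall m, (- Nt <= m)%Z -> xB m 0%R = (- m)%Z) by (intros m Hm; exact (proj1 HxB m Hm)).
  assert (X0le : forall m, (- Nt <= m)%Z -> (x m 0%R <= - m)%Z).
  { intros m Hm. rewrite (X0 m Hm). destruct (Z.leb_spec 1 m); lia. }
  assert (Hpre : (Lb < x n s <= Rb)%Z).
  { pose proof (pre_inv P (- Nt)%Z _ x s Lb Rb n s G Hx HL HR Hs ltac:(lia) ltac:(lra)). lia. }
  assert (CA : (x n s <= xA n s)%Z).
  { apply (compare P (- Nt)%Z _ x 1%Z _ xA s Lb Rb (- Lb)%Z G Hx HxA ltac:(lia) Hs HL HR); try lia.
    - intros m Hm. rewrite (X0 m ltac:(lia)), (XA0 m Hm). destruct (Z.leb_spec 1 m); lia.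
    - intros m Hm H. pose proof (X0le m ltac:(lia)). pose proof (XA0 m Hm). lia.
    - lra. }
  assert (CB : (x n s <= xB n s)%Z).
  { apply (compare P (- Nt)%Z _ x (- Nt)%Z _ xB s Lb Rb (- Lb)%Z G Hx HxB ltac:(lia) Hs HL HR); try lia.
    - intros m Hm. pose proof (X0le m Hm). pose proof (XB0 m Hm). lia.
    - intros m Hm H. pose proof (X0le m ltac:(lia)). pose proof (XB0 m Hm). lia.
    - lra. }
  split; [|lia].
  intros Hp1.
  assert (Ty : (ymin xA xB 1 n s <= x n s)%Z).
  { apply (tasep_min P (- Nt)%Z _ x 1%Z _ xA _ xB s Lb Rb (- Lb)%Z G (Hleft Hp1) Hx HxA HxB ltac:(lia) Hs HL HR); try lia.
    - intros m Hm. unfold ymin. rewrite (X0 m Hm), (XB0 m Hm).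
      destruct (Z.leb_spec 1 m); [rewrite (XA0 m ltac:(lia))|]; lia.
    - intros m Hm H. pose proof (X0le m Hm). lia.
    - lra. }
  unfold ymin in Ty. destruct (Z.leb_spec 1 n); lia.
Qed.
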